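(* $\mathsf{WBWT}_2\le_W\overline{\mathsf C_\mathbb N}$ and $\mathsf{WBWT}_2\not\le_W\mathsf C_\mathbb N$.
   Context: A problem $f:\subseteq X\rightrightarrows Y$ between represented spaces is a partial multi-valued map; $F\vdash f$ means $\delta_YF(p)\in f(\delta_X(p))$ whenever $\delta_X(p)\in\mathrm{dom}(f)$; $f\le_W g$ iff there are computable partial $H,K$ with $H\langle\mathrm{id},GK\rangle\vdash f$ for all $G\vdash g$. $\mathsf{WBWT}_2:2^\mathbb N\rightrightarrows2^\mathbb N$ maps $p$ to the set of $q\in2^\mathbb N$ such that $\lim_{n}q(n)$ exists and is a cluster point of $p$ (i.e. a value occurring infinitely often in $p$). $\mathcal A_-(\mathbb N)$ is the space of subsets of $\mathbb N$ represented by negative information ($p$ names $\mathbb N\setminus\{n:n+1\in\mathrm{range}(p)\}$); $\mathsf C_\mathbb N:\subseteq\mathcal A_-(\mathbb N)\rightrightarrows\mathbb N$, $A\mapsto A$, on nonempty $A$, with $\mathbb N$ represented by $p\mapsto p(0)$. For $p\in\mathbb{N}^\mathbb{N}$, $p-1$ is the concatenation of $p(0)-1,p(1)-1,\dots$ with $0-1$ the empty word; the completion of $(X,\delta_X)$ is $\overline X=X\cup\{\bot\}$ with $\delta_{\overline X}(p)=\delta_X(p-1)$ if $p-1$ is an infinite sequence in $\mathrm{dom}(\delta_X)$, $\bot$ otherwise; $\overline f:\overline X\rightrightarrows\overline Y$ equals $f$ on $\mathrm{dom}(f)$ and $\overline Y$ elsewhere. *)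

(* Defs.v *)
From Stdlib Require Import List Arith PeanoNat.
Import ListNotations.

Definition baire := nat -> nat.

Inductive code : Type :=
| cZero : code
| cSucc : code
| cProj : nat -> code
| cComp : code -> list code -> code
| cPrim : code -> code -> code
| cMu : code -> code.

Inductive eval : code -> list nat -> nat -> Prop :=
| eZero v : eval cZero v 0
| eSucc x v : eval cSucc (x :: v) (S x)
| eProj i v : i < length v -> eval (cProj i) v (nth i v 0)
| eComp f gs v ws y : evals gs v ws -> eval f ws y -> eval (cComp f gs) v y
| ePrim0 f g v y : eval f v y -> eval (cPrim f g) (0 :: v) y
| ePrimS f g n v z y :
    eval (cPrim f g) (n :: v) z -> eval g (n :: z :: v) y ->
    eval (cPrim f g) (S n :: v) y
| eMu f v n :
    eval f (n :: v) 0 ->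
    (forall m, m < n -> exists k, eval f (m :: v) (S k)) ->
    eval (cMu f) v n
with evals : list code -> list nat -> list nat -> Prop :=
| esNil v : evals nil v nil
| esCons g gs v w ws : eval g v w -> evals gs v ws -> evals (g :: gs) v (w :: ws).

Definition cpair (x y : nat) : nat := (x + y) * (x + y + 1) / 2 + y.
Fixpoint enc (l : list nat) : nat :=
  match l with
  | nil => 0
  | x :: l' => S (cpair x (enc l'))
  end.
Definition prefix (p : baire) (k : nat) : list nat := map p (seq 0 k).

(* The partial functional on Baire space computed by (the associate) c:
   F_c(p) = q iff for every n, at the first prefix length k where
   c(n, p|k) returns a nonzero value (all earlier calls converging to 0),
   that value is q(n)+1. These are exactly the computable partial maps
   (up to restriction of domains). *)
Definition CompF (c : code) (p q : baire) : Prop :=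
  forall n, exists k,
    eval c [n; enc (prefix p k)] (S (q n)) /\
    (forall k', k' < k -> eval c [n; enc (prefix p k')] 0).

Definition bpair (p q : baire) : baire :=
  fun n => if Nat.even n then p (Nat.div2 n) else q (Nat.div2 n).

Record rep : Type := Rep {
  carrier : Type;
  delta : baire -> carrier -> Prop   (* graph of the partial representation *)
}.

Definition problem (X Y : rep) := carrier X -> carrier Y -> Prop.
Definition dom {X Y : rep} (f : problem X Y) (x : carrier X) : Prop :=
  exists y, f x y.

Definition functional (F : baire -> baire -> Prop) : Prop :=
  forall p q q', F p q -> F p q' -> q = q'.

Definition realizes {X Y : rep} (F : baire -> baire -> Prop) (f : problem X Y) : Prop :=
  forall p x, delta X p x -> dom f x ->
    exists q y, F p q /\ delta Y q y /\ f x y.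

Definition Wred {X Y Z W : rep} (f : problem X Y) (g : problem Z W) : Prop :=
  exists cH cK : code,
    forall G : baire -> baire -> Prop, functional G -> realizes G g ->
      realizes (fun p r => exists k s, CompF cK p k /\ G k s /\
                                       CompF cH (bpair p s) r) f.

Definition Cantor : rep :=
  Rep (nat -> bool) (fun p q => forall n, p n = if q n then 1 else 0).

Definition NatR : rep := Rep nat (fun p n => p 0 = n).

Definition Aminus : rep :=
  Rep (nat -> Prop) (fun p A => forall n, A n <-> ~ exists i, p i = S n).

Definition minus1 (p q : baire) : Prop :=
  exists e : nat -> nat,
    (forall i, e i < e (S i)) /\
    (forall j, p j <> 0 <-> exists i, e i = j) /\
    (forall i, q i = p (e i) - 1).

Definition completion (X : rep) : rep :=
  Rep (option (carrier X))
      (fun p x => match x with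
                  | Some x' => exists q, minus1 p q /\ delta X q x'
                  | None => ~ exists q x', minus1 p q /\ delta X q x'
                  end).

Definition bar {X Y : rep} (f : problem X Y) : problem (completion X) (completion Y) :=
  fun x y => match x with
             | Some x' => dom f x' -> exists y', y = Some y' /\ f x' y'
             | None => True
             end.

Definition cluster (p : nat -> bool) (b : bool) : Prop :=
  forall N, exists n, N <= n /\ p n = b.

Definition WBWT2 : problem Cantor Cantor :=
  fun (p q : nat -> bool) =>
    exists b, (exists N, forall n, N <= n -> q n = b) /\ cluster p b.

Definition CN : problem Aminus NatR := fun (A : nat -> Prop) (n : nat) => A n.

(* Main.v *)
Require Import Defs.
From Stdlib Require Import List Arith PeanoNat Lia Classical ClassicalEpsilon.
Import ListNotations.

Lemma eComp' f gs v ws y : eval f ws y -> evals gs v ws -> eval (cComp f gs) v y.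
Proof. intros; eapply eComp; eauto. Qed.

Lemma prim_ok f g v (h : nat -> nat) :
  eval f v (h 0) -> (forall n, eval g (n :: h n :: v) (h (S n))) ->
  forall n, eval (cPrim f g) (n :: v) (h n).
Proof. intros H0 HS n; induction n. constructor; auto. eapply ePrimS; eauto. Qed.

Definition ifz (a b c : nat) := match a with 0 => b | S _ => c end.

Create HintDb evdb.

Ltac ev :=
  lazymatch goal with
  | |- evals nil _ _ => apply esNil
  | |- evals (_ :: _) _ _ => eapply esCons; [ev | ev]
  | |- eval (cComp _ _) _ _ => eapply eComp'; [ev | ev]
  | |- eval (cProj _) _ _ => apply eProj; simpl; lia
  | |- eval cZero _ _ => apply eZero
  | |- eval cSucc _ _ => apply eSucc
  | |- _ => solve [eauto with evdb]
  end.

Definition cPred := cPrim cZero (cProj 0).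
Lemma pred_ok n : eval cPred [n] (pred n).
Proof. apply (prim_ok _ _ [] pred). ev. intro m. ev. Qed.
Hint Resolve pred_ok : evdb.

Definition cAdd := cPrim (cProj 0) (cComp cSucc [cProj 1]).
Lemma add_ok a b : eval cAdd [a; b] (a + b).
Proof. apply (prim_ok _ _ [b] (fun n => n + b)). ev. intro m. ev. Qed.
Hint Resolve add_ok : evdb.

Definition cSubR := cPrim (cProj 0) (cComp cPred [cProj 1]).
Definition cSub := cComp cSubR [cProj 1; cProj 0].
Lemma sub_ok a b : eval cSub [a; b] (a - b).
Proof.
  assert (H : forall n, eval cSubR [n; a] (a - n)).
  { apply (prim_ok _ _ [a] (fun n => a - n)).
    replace (a - 0) with a by lia. ev.
    intro m. replace (a - S m) with (pred (a - m)) by lia. ev. }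
  unfold cSub. eapply eComp'. apply H. ev.
Qed.
Hint Resolve sub_ok : evdb.

Definition cIfz := cPrim (cProj 0) (cProj 3).
Lemma ifz_ok a b c : eval cIfz [a; b; c] (ifz a b c).
Proof. apply (prim_ok _ _ [b; c] (fun n => ifz n b c)). ev. intro m. ev. Qed.
Hint Resolve ifz_ok : evdb.

Fixpoint T t := match t with 0 => 0 | S t' => T t' + S t' end.
Definition cT := cPrim cZero (cComp cAdd [cProj 1; cComp cSucc [cProj 0]]).
Lemma T_ok t : eval cT [t] (T t).
Proof. apply (prim_ok _ _ [] T). ev. intro m. ev. Qed.
Hint Resolve T_ok : evdb.

Fixpoint dd z := match z with 0 => 0
  | S z' => ifz (T (S (dd z')) - S z') (S (dd z')) (dd z') end.
Definition cdd := cPrim cZero (cComp cIfz [cComp cSub [cComp cT [cComp cSucc [cProj 1]]; cComp cSucc [cProj 0]]; cComp cSucc [cProj 1]; cProj 1]).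
Lemma dd_ok z : eval cdd [z] (dd z).
Proof. apply (prim_ok _ _ [] dd). ev. intro m. ev. Qed.
Hint Resolve dd_ok : evdb.

Definition snd' w := w - T (dd w).
Definition fst' w := dd w - snd' w.
Definition csnd := cComp cSub [cProj 0; cComp cT [cComp cdd [cProj 0]]].
Lemma snd_ok w : eval csnd [w] (snd' w).
Proof. unfold csnd, snd'. ev. Qed.
Hint Resolve snd_ok : evdb.
Definition cfst := cComp cSub [cComp cdd [cProj 0]; csnd].
Lemma fst_ok w : eval cfst [w] (fst' w).
Proof. unfold cfst, fst'. ev. Qed.
Hint Resolve fst_ok : evdb.

Definition hd w := fst' (pred w).
Definition tl w := snd' (pred w).
Definition chd := cComp cfst [cComp cPred [cProj 0]].
Definition ctl := cComp csnd [cComp cPred [cProj 0]].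
Lemma hd_ok w : eval chd [w] (hd w). Proof. unfold chd, hd. ev. Qed.
Lemma tl_ok w : eval ctl [w] (tl w). Proof. unfold ctl, tl. ev. Qed.
Hint Resolve hd_ok tl_ok : evdb.

Fixpoint tlI i w := match i with 0 => w | S i' => tl (tlI i' w) end.
Definition ctlI := cPrim (cProj 0) (cComp ctl [cProj 1]).
Lemma tlI_ok i w : eval ctlI [i; w] (tlI i w).
Proof. apply (prim_ok _ _ [w] (fun i => tlI i w)). ev. intro m. ev. Qed.
Hint Resolve tlI_ok : evdb.

Fixpoint sumh n w := match n with 0 => 0 | S m => sumh m w + hd (tlI m w) end.
Definition csumh := cPrim cZero (cComp cAdd [cProj 1; cComp chd [cComp ctlI [cProj 0; cProj 2]]]).
Lemma sumh_ok n w : eval csumh [n; w] (sumh n w).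
Proof. apply (prim_ok _ _ [w] (fun n => sumh n w)). ev. intro m. ev. Qed.
Hint Resolve sumh_ok : evdb.

Definition Kf n w := ifz (tlI n w) 0 (S (ifz (hd (tlI n w)) 1 (S (S (sumh n w))))).
Definition cone := cComp cSucc [cZero].
Definition cK := cComp cIfz [cComp ctlI [cProj 0; cProj 1]; cZero;
  cComp cSucc [cComp cIfz [cComp chd [cComp ctlI [cProj 0; cProj 1]]; cone;
     cComp cSucc [cComp cSucc [cComp csumh [cProj 0; cProj 1]]]]]].
Lemma K_ok n w : eval cK [n; w] (Kf n w).
Proof. unfold cK, Kf, cone. ev. Qed.

Fixpoint vv n w := match n with 0 => 0 | S m => ifz (vv m w) (hd (tlI (S (m + m)) w)) (vv m w) end.
Definition cvv := cPrim cZero (cComp cIfz [cProj 1; cComp chd [cComp ctlI [cComp cSucc [cComp cAdd [cProj 0; cProj 0]]; cProj 2]]; cProj 1]).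
Lemma vv_ok n w : eval cvv [n; w] (vv n w).
Proof. apply (prim_ok _ _ [w] (fun n => vv n w)). ev. intro m. ev. Qed.
Hint Resolve vv_ok : evdb.

Fixpoint PP n w := match n with 0 => 0 | S m => PP m w + hd (tlI (m + m) w) end.
Definition cPP := cPrim cZero (cComp cAdd [cProj 1; cComp chd [cComp ctlI [cComp cAdd [cProj 0; cProj 0]; cProj 2]]]).
Lemma PP_ok n w : eval cPP [n; w] (PP n w).
Proof. apply (prim_ok _ _ [w] (fun n => PP n w)). ev. intro m. ev. Qed.
Hint Resolve PP_ok : evdb.

Definition Hf i w := ifz (tlI (S (i + i)) w) 0
  (S (ifz (vv (S i) w) 1 (ifz (vv (S i) w - PP (S i) w) 1 0))).
Definition cH := cComp cIfz [cComp ctlI [cComp cSucc [cComp cAdd [cProj 0; cProj 0]]; cProj 1]; cZero;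
  cComp cSucc [cComp cIfz [cComp cvv [cComp cSucc [cProj 0]; cProj 1]; cone;
    cComp cIfz [cComp cSub [cComp cvv [cComp cSucc [cProj 0]; cProj 1]; cComp cPP [cComp cSucc [cProj 0]; cProj 1]]; cone; cZero]]]].
Lemma H_ok i w : eval cH [i; w] (Hf i w).
Proof. unfold cH, Hf, cone. ev. Qed.

Lemma T2 t : 2 * T t = t * (t + 1).
Proof. induction t; simpl T; [reflexivity|]. nia. Qed.

Lemma cpair_T x y : cpair x y = T (x + y) + y.
Proof.
  unfold cpair. f_equal. rewrite <- T2. rewrite Nat.mul_comm. apply Nat.div_mul. lia.
Qed.

Lemma T_mono a b : a <= b -> T a <= T b.
Proof. induction 1; simpl; lia. Qed.

Lemma dd_spec z : T (dd z) <= z < T (S (dd z)).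
Proof.
  induction z; simpl; [lia|].
  unfold ifz. destruct (T (dd z) + S (dd z) - S z) eqn:E; simpl in *; lia.
Qed.

Lemma dd_unique t z : T t <= z < T (S t) -> dd z = t.
Proof.
  intros H. pose proof (dd_spec z).
  destruct (Nat.lt_trichotomy (dd z) t) as [h|[h|h]]; auto.
  - pose proof (T_mono (S (dd z)) t h). lia.
  - pose proof (T_mono (S t) (dd z) h). lia.
Qed.

Lemma dd_cpair x y : dd (cpair x y) = x + y.
Proof. apply dd_unique. rewrite cpair_T. simpl. lia. Qed.
Lemma snd_cpair x y : snd' (cpair x y) = y.
Proof. unfold snd'. rewrite dd_cpair, cpair_T. lia. Qed.
Lemma fst_cpair x y : fst' (cpair x y) = x.
Proof. unfold fst'. rewrite dd_cpair, snd_cpair. lia. Qed.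

Lemma hd_enc x l : hd (enc (x :: l)) = x.
Proof. unfold hd. simpl. apply fst_cpair. Qed.
Lemma tl_enc_cons x l : tl (enc (x :: l)) = enc l.
Proof. unfold tl. simpl. apply snd_cpair. Qed.
Lemma tl_enc l : tl (enc l) = enc (skipn 1 l).
Proof. destruct l. reflexivity. apply tl_enc_cons. Qed.

Lemma tl_skipn l i : tl (enc (skipn i l)) = enc (skipn (S i) l).
Proof.
  revert i; induction l; intros i; destruct i; simpl; try reflexivity.
  apply tl_enc_cons. apply IHl.
Qed.

Lemma tlI_enc i l : tlI i (enc l) = enc (skipn i l).
Proof. induction i; simpl. reflexivity. rewrite IHi. apply tl_skipn. Qed.

Lemma skipn_map_seq (p : baire) i a k :
  skipn i (map p (seq a k)) = map p (seq (a + i) (k - i)).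
Proof.
  revert a k; induction i; intros a k.
  - simpl. rewrite Nat.add_0_r, Nat.sub_0_r. reflexivity.
  - destruct k; simpl. reflexivity. rewrite IHi. f_equal. f_equal. lia.
Qed.

Lemma tlI_prefix p i k : tlI i (enc (prefix p k)) = enc (map p (seq i (k - i))).
Proof. unfold prefix. rewrite tlI_enc, skipn_map_seq. reflexivity. Qed.

Lemma tlI_prefix_zero p i k : k <= i -> tlI i (enc (prefix p k)) = 0.
Proof. intros. rewrite tlI_prefix. replace (k - i) with 0 by lia. reflexivity. Qed.

Lemma tlI_prefix_pos p i k : i < k -> tlI i (enc (prefix p k)) <> 0
  /\ hd (tlI i (enc (prefix p k))) = p i.
Proof.
  intros. rewrite tlI_prefix. destruct (k - i) eqn:E; [lia|]. simpl.
  split. lia. apply fst_cpair.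
Qed.

Fixpoint ones (p : baire) n := match n with 0 => 0 | S m => ones p m + p m end.

Lemma sumh_prefix p n k : n <= k -> sumh n (enc (prefix p k)) = ones p n.
Proof.
  induction n; simpl; intros; auto.
  rewrite IHn by lia. f_equal. apply tlI_prefix_pos. lia.
Qed.

Definition kn (p : baire) n := ifz (p n) 1 (S (S (ones p n))).

Lemma Kf_prefix p n k : Kf n (enc (prefix p k)) = if k <=? n then 0 else S (kn p n).
Proof.
  unfold Kf. destruct (Nat.leb_spec k n).
  - rewrite tlI_prefix_zero by lia. reflexivity.
  - destruct (tlI_prefix_pos p n k H) as [H1 H2]. rewrite H2.
    rewrite sumh_prefix by lia.
    destruct (tlI n _); [congruence|]. reflexivity.
Qed.

Lemma even_dbl j : Nat.even (j + j) = true /\ Nat.div2 (j + j) = j /\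
  Nat.even (S (j + j)) = false /\ Nat.div2 (S (j + j)) = j.
Proof.
  assert (E1 : forall n, Nat.even (S (S n)) = Nat.even n) by reflexivity.
  assert (E2 : forall n, Nat.div2 (S (S n)) = S (Nat.div2 n)) by reflexivity.
  induction j. simpl. auto.
  rewrite Nat.add_succ_r. simpl plus. rewrite !E1, !E2. destruct IHj as (A & B & C & D).
  rewrite A, B, C, D. auto.
Qed.

Lemma bpair_even p s j : bpair p s (j + j) = p j.
Proof. unfold bpair. destruct (even_dbl j) as (A & B & _). rewrite A, B. auto. Qed.
Lemma bpair_odd p s j : bpair p s (S (j + j)) = s j.
Proof. unfold bpair. destruct (even_dbl j) as (_ & _ & A & B). rewrite A, B. auto. Qed.

Fixpoint vq (s : baire) n := match n with 0 => 0 | S m => ifz (vq s m) (s m) (vq s m) end.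

Lemma vv_prefix p s n k : n + n <= k -> vv n (enc (prefix (bpair p s) k)) = vq s n.
Proof.
  induction n; simpl; intros; auto.
  rewrite IHn by lia. destruct (tlI_prefix_pos (bpair p s) (S (n + n)) k) as [_ H2]. lia.
  simpl tlI in H2. rewrite H2, bpair_odd. reflexivity.
Qed.

Lemma PP_prefix p s n k : n + n <= k -> PP n (enc (prefix (bpair p s) k)) = ones p n.
Proof.
  induction n; simpl; intros; auto.
  rewrite IHn by lia. destruct (tlI_prefix_pos (bpair p s) (n + n) k) as [_ H2]. lia.
  rewrite H2, bpair_even. reflexivity.
Qed.

Definition hq p s i := ifz (vq s (S i)) 1 (ifz (vq s (S i) - ones p (S i)) 1 0).

Lemma Hf_prefix p s i k : Hf i (enc (prefix (bpair p s) k)) =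
  if k <=? S (i + i) then 0 else S (hq p s i).
Proof.
  unfold Hf. destruct (Nat.leb_spec k (S (i + i))).
  - rewrite tlI_prefix_zero by lia. reflexivity.
  - destruct (tlI_prefix_pos (bpair p s) _ k H) as [H1 _].
    rewrite vv_prefix, PP_prefix by lia.
    destruct (tlI _ _); [congruence|]. reflexivity.
Qed.

Lemma CompF_K p : CompF cK p (kn p).
Proof.
  intro n. exists (S n). split.
  - pose proof (K_ok n (enc (prefix p (S n)))). rewrite Kf_prefix in H.
    destruct (Nat.leb_spec (S n) n). lia. auto.
  - intros k' Hk. pose proof (K_ok n (enc (prefix p k'))). rewrite Kf_prefix in H.
    destruct (Nat.leb_spec k' n). auto. lia.
Qed.

Lemma CompF_H p s : CompF cH (bpair p s) (hq p s).
Proof.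
  intro n. exists (S (S (n + n))). split.
  - pose proof (H_ok n (enc (prefix (bpair p s) (S (S (n + n)))))). rewrite Hf_prefix in H.
    destruct (Nat.leb_spec (S (S (n + n))) (S (n + n))). lia. auto.
  - intros k' Hk. pose proof (H_ok n (enc (prefix (bpair p s) k'))). rewrite Hf_prefix in H.
    destruct (Nat.leb_spec k' (S (n + n))). auto. lia.
Qed.

Fixpoint code_ind2 (P : code -> Prop)
  (H0 : P cZero) (H1 : P cSucc) (H2 : forall i, P (cProj i))
  (H3 : forall f gs, P f -> Forall P gs -> P (cComp f gs))
  (H4 : forall f g, P f -> P g -> P (cPrim f g))
  (H5 : forall f, P f -> P (cMu f)) (c : code) {struct c} : P c :=
  match c with
  | cZero => H0 | cSucc => H1 | cProj i => H2 i
  | cComp f gs => H3 f gs (code_ind2 P H0 H1 H2 H3 H4 H5 f)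
      ((fix go (l : list code) : Forall P l :=
         match l with nil => Forall_nil _
         | g :: l' => Forall_cons _ (code_ind2 P H0 H1 H2 H3 H4 H5 g) (go l') end) gs)
  | cPrim f g => H4 f g (code_ind2 P H0 H1 H2 H3 H4 H5 f) (code_ind2 P H0 H1 H2 H3 H4 H5 g)
  | cMu f => H5 f (code_ind2 P H0 H1 H2 H3 H4 H5 f)
  end.

Definition detP c := forall v y, eval c v y -> forall y', eval c v y' -> y = y'.

Lemma evals_det gs : Forall detP gs -> forall v ws, evals gs v ws -> forall ws', evals gs v ws' -> ws = ws'.
Proof.
  induction 1; intros v ws E ws' E'; inversion E; inversion E'; subst; auto.
  f_equal; eauto.
Qed.

Lemma eval_det_all : forall c, detP c.
Proof.
  apply code_ind2; unfold detP; intros.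
  - inversion H; inversion H0; auto.
  - inversion H; inversion H0; subst; congruence.
  - inversion H; inversion H0; subst; congruence.
  - inversion H1; inversion H2; subst.
    match goal with Ha : evals gs v ?a, Hb : evals gs v ?b |- _ =>
      assert (a = b) by (eapply evals_det; eauto) end. subst. eauto.
  - revert y y' H1 H2. induction v as [|n v'] using (fun P => list_ind P); intros.
    inversion H1.
    revert y y' H1 H2. induction n; intros; inversion H1; inversion H2; subst; eauto.
    match goal with Ha : eval (cPrim f g) (n :: v') ?a, Hb : eval (cPrim f g) (n :: v') ?b |- _ =>
      assert (a = b) by (eapply IHn; eauto) end. subst. eauto.
  - inversion H0; inversion H1; subst.
    destruct (Nat.lt_trichotomy y y') as [h|[h|h]]; auto.
    + match goal with Hx : forall m, m < y' -> _ |- _ => destruct (Hx _ h) as [k Hk] end.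
      match goal with Hx : eval f (y :: v) 0 |- _ => apply (H _ _ Hx) in Hk; discriminate end.
    + match goal with Hx : forall m, m < y -> _ |- _ => destruct (Hx _ h) as [k Hk] end.
      match goal with Hx : eval f (y' :: v) 0 |- _ => apply (H _ _ Hx) in Hk; discriminate end.
Qed.

Lemma eval_det c v y y' : eval c v y -> eval c v y' -> y = y'.
Proof. intros; eapply eval_det_all; eauto. Qed.

Definition Wit c p i L v := eval c [i; enc (prefix p L)] (S v) /\
  forall L', L' < L -> eval c [i; enc (prefix p L')] 0.

Lemma Wit_det c p i L L' v v' : Wit c p i L v -> Wit c p i L' v' -> v = v'.
Proof.
  intros [A1 A2] [B1 B2].
  destruct (Nat.lt_trichotomy L L') as [h|[h|h]].
  - specialize (B2 _ h). pose proof (eval_det _ _ _ _ A1 B2). discriminate.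
  - subst. pose proof (eval_det _ _ _ _ A1 B1). congruence.
  - specialize (A2 _ h). pose proof (eval_det _ _ _ _ B1 A2). discriminate.
Qed.

Lemma prefix_agree (p p' : baire) L : (forall n, n < L -> p n = p' n) -> prefix p L = prefix p' L.
Proof.
  intros H. unfold prefix. apply map_ext_in. intros a Ha. apply in_seq in Ha. apply H. lia.
Qed.

Lemma Wit_agree c p p' i L v : Wit c p i L v -> (forall n, n < L -> p n = p' n) -> Wit c p' i L v.
Proof.
  intros [A1 A2] H. split.
  - rewrite <- (prefix_agree p p' L H). auto.
  - intros L' h. rewrite <- (prefix_agree p p' L'). auto. intros; apply H; lia.
Qed.

Lemma CompF_wit c p q i L v : CompF c p q -> Wit c p i L v -> q i = v.
Proof. intros H W. destruct (H i) as [L0 W0]. eapply Wit_det; [exact W0| exact W]. Qed.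

Lemma CompF_func c p q q' : CompF c p q -> CompF c p q' -> forall i, q i = q' i.
Proof. intros H H' i. destruct (H' i) as [L W]. eapply CompF_wit; eauto. Qed.

Lemma least_nat (P : nat -> Prop) : (exists n, P n) -> exists n, P n /\ forall m, m < n -> ~ P m.
Proof.
  intros [n Hn].
  assert (forall k, forall n, n <= k -> P n -> exists n, P n /\ forall m, m < n -> ~ P m).
  { induction k; intros n0 Hle Hp.
    - exists n0. split; auto. intros; lia.
    - destruct (classic (exists m, m < n0 /\ P m)) as [[m [Hm Pm]]|Hno].
      + apply (IHk m). lia. auto.
      + exists n0. split; auto. intros m Hm Pm. apply Hno; eauto. }
  eauto.
Qed.

Lemma bound_lemma (Q : nat -> nat -> Prop) M :
  (forall m, m < M -> exists L, Q m L) ->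
  exists B, forall m, m < M -> exists L, L <= B /\ Q m L.
Proof.
  induction M; intros H.
  - exists 0. intros; lia.
  - destruct IHM as [B HB]. intros; apply H; lia.
    destruct (H M) as [L HL]. lia.
    exists (B + L). intros m Hm. destruct (Nat.eq_dec m M).
    + subst. exists L. split; auto. lia.
    + destruct (HB m) as [L' [H1 H2]]. lia. exists L'. split; auto. lia.
Qed.

Lemma dom_WBWT2 (x : nat -> bool) : dom WBWT2 x.
Proof.
  destruct (classic (cluster x true)) as [Hc|Hc].
  - exists (fun _ => true). exists true. split; auto. exists 0; auto.
  - exists (fun _ => false). exists false. split. exists 0; auto.
    apply not_all_ex_not in Hc. destruct Hc as [N HN].
    intro N'. exists (N + N'). split. lia.
    destruct (x (N + N')) eqn:E; auto. exfalso. apply HN. exists (N + N'). split; auto. lia.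
Qed.

Definition G0 (k s : baire) : Prop := exists n, (forall i, k i <> S n) /\
  (forall m, m < n -> exists i, k i = S m) /\ s = fun _ => n.

Lemma G0_func : functional G0.
Proof.
  intros k s s' [n [A1 [A2 ->]]] [n' [B1 [B2 ->]]].
  destruct (Nat.lt_trichotomy n n') as [h|[h|h]].
  - destruct (B2 _ h) as [i Hi]. exfalso; eapply A1; eauto.
  - subst; auto.
  - destruct (A2 _ h) as [i Hi]. exfalso; eapply B1; eauto.
Qed.

Lemma G0_real : @realizes Aminus NatR G0 CN.
Proof.
  intros p A HA [y Hy]. simpl in *.
  destruct (least_nat A (ex_intro _ y Hy)) as [n [Hn Hmin]].
  exists (fun _ => n), n. split; [|split; simpl; auto].
  exists n. split; [|split; auto].
  - intros i Hi. apply HA in Hn. apply Hn. eauto.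
  - intros m Hm. apply Hmin in Hm. apply NNPP. intro C. apply Hm. apply HA. auto.
Qed.

Definition nm (y : nat -> bool) : baire := fun n => if y n then 1 else 0.
Definition cf (L : nat) (f : nat -> bool) (b : bool) : nat -> bool :=
  fun n => if n <? L then f n else b.

Section Neg.
Variables cH0 cK0 : code.
Hypothesis HW : forall y : nat -> bool, exists (q : baire) (Y : nat -> bool),
  (exists k s, CompF cK0 (nm y) k /\ G0 k s /\ CompF cH0 (bpair (nm y) s) q) /\
  (forall n, q n = if Y n then 1 else 0) /\ WBWT2 y Y.

Definition Good L f b t j := let y := cf L f b in
  exists mu i LH, t <= i /\ LH <= 2 * (L + j) /\
    Wit cH0 (bpair (nm y) (fun _ => mu)) i LH (if b then 1 else 0) /\
    (forall m, m < mu -> exists i' L', L' <= L + j /\ Wit cK0 (nm y) i' L' (S m)) /\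
    (exists k, CompF cK0 (nm y) k /\ forall i', k i' <> S mu).

Lemma step L f b t : exists j, 1 <= j /\ Good L f b t j.
Proof.
  destruct (HW (cf L f b)) as (q & Y & (k & s & HK & [mu [G1 [G2 ->]]] & HH) & HY & [b' [[N0 HN0] Hcl]]).
  assert (b' = b).
  { destruct (Hcl L) as [n [Hn Hb]]. unfold cf in Hb.
    destruct (Nat.ltb_spec n L). lia. auto. }
  subst b'.
  destruct (HH (t + N0)) as [LH WH].
  assert (Hq : q (t + N0) = if b then 1 else 0) by (rewrite HY, HN0 by lia; auto).
  rewrite Hq in WH.
  destruct (bound_lemma (fun m L' => exists i', Wit cK0 (nm (cf L f b)) i' L' (S m)) mu) as [B HB].
  { intros m Hm. destruct (G2 m Hm) as [i' Hi']. destruct (HK i') as [L' W].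
    rewrite Hi' in W. eauto. }
  exists (LH + B + 1). split. lia.
  exists mu, (t + N0), LH. split. lia. split. lia. split. auto. split.
  - intros m Hm. destruct (HB m Hm) as [L' [HL' [i' W]]]. exists i', L'. split; auto. lia.
  - exists k. split; auto.
Qed.

Definition Jf (t L : nat) (f : nat -> bool) : nat :=
  proj1_sig (constructive_indefinite_description _ (step L f (Nat.even t) t)).

Lemma Jf_spec t L f : 1 <= Jf t L f /\ Good L f (Nat.even t) t (Jf t L f).
Proof. unfold Jf. destruct (constructive_indefinite_description _ _). simpl. auto. Qed.

Fixpoint st (t : nat) : nat * (nat -> bool) :=
  match t with
  | 0 => (0, fun _ => true)
  | S t' => (fst (st t') + Jf t' (fst (st t')) (snd (st t')),
             cf (fst (st t')) (snd (st t')) (Nat.even t'))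
  end.
Definition Ls t := fst (st t).
Definition fs t := snd (st t).

Lemma Ls_S t : Ls (S t) = Ls t + Jf t (Ls t) (fs t).
Proof. reflexivity. Qed.
Lemma fs_S t : fs (S t) = cf (Ls t) (fs t) (Nat.even t).
Proof. reflexivity. Qed.

Lemma Ls_ge t : t <= Ls t.
Proof. induction t. unfold Ls; simpl; lia. rewrite Ls_S. pose proof (proj1 (Jf_spec t (Ls t) (fs t))). lia. Qed.
Lemma Ls_mono t t' : t <= t' -> Ls t <= Ls t'.
Proof. induction 1. lia. rewrite Ls_S. lia. Qed.

Lemma fs_stable t t' n : t <= t' -> n < Ls t -> fs t' n = fs t n.
Proof.
  induction 1; intros; auto.
  rewrite fs_S. unfold cf. pose proof (Ls_mono _ _ H).
  destruct (Nat.ltb_spec n (Ls m)). auto. lia.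
Qed.

Definition xf n := fs (S n) n.

Lemma xf_agree t n : n < Ls t -> xf n = fs t n.
Proof.
  intros H. unfold xf. destruct (Nat.le_ge_cases (S n) t).
  - symmetry. apply fs_stable; auto. pose proof (Ls_ge (S n)). lia.
  - apply fs_stable; auto.
Qed.

Lemma div2_lt n L : n < 2 * L -> Nat.div2 n < L.
Proof. intros. pose proof (Nat.div2_odd n). destruct (Nat.odd n); simpl in *; lia. Qed.

Lemma even_S n : Nat.even (S n) = negb (Nat.even n).
Proof. rewrite Nat.even_succ, <- Nat.negb_even. reflexivity. Qed.

Lemma neg_contra : False.
Proof.
  destruct (HW xf) as (q & Y & (k & s & HK & [M [G1 [G2 ->]]] & HH) & HY & [b' [[N0 HN0] _]]).
  destruct (bound_lemma (fun m L' => exists i', Wit cK0 (nm xf) i' L' (S m)) M) as [B HB].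
  { intros m Hm. destruct (G2 m Hm) as [i' Hi']. destruct (HK i') as [L' W].
    rewrite Hi' in W. eauto. }
  assert (Key : forall t, B <= t -> exists i, t <= i /\ q i = if Nat.even t then 1 else 0).
  { intros t Ht.
    destruct (Jf_spec t (Ls t) (fs t)) as [_ (mu & i & LH & Hi & HLH & WH & Hrem & (k' & HK' & Hk'))].
    rewrite <- Ls_S in *. rewrite <- fs_S in *.
    assert (Agr : forall n, n < Ls (S t) -> nm (fs (S t)) n = nm xf n).
    { intros n Hn. unfold nm. rewrite (xf_agree (S t) n Hn). auto. }
    assert (Hmu : mu = M).
    { destruct (Nat.lt_trichotomy mu M) as [h|[h|h]]; auto; exfalso.
      - destruct (HB mu h) as [L' [HL' [i' W]]].
        apply (Hk' i'). eapply CompF_wit; [exact HK'|].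
        eapply Wit_agree; [exact W|]. intros n Hn. symmetry. apply Agr.
        pose proof (Ls_ge t). pose proof (Ls_mono t (S t)). lia.
      - destruct (Hrem M h) as [i' [L' [HL' W]]].
        apply (G1 i'). eapply CompF_wit; [exact HK|].
        eapply Wit_agree; [exact W|]. intros n Hn. apply Agr. lia. }
    subst mu. exists i. split; auto.
    eapply CompF_wit; [exact HH|]. eapply Wit_agree; [exact WH|].
    intros n Hn. unfold bpair. destruct (Nat.even n); auto. apply Agr. apply div2_lt. lia. }
  set (t0 := B + N0).
  assert (exists t, t0 <= t /\ Nat.even t <> b') as [t [Ht Hb]].
  { destruct (Bool.bool_dec (Nat.even t0) b').
    - exists (S t0). split. lia. rewrite even_S. destruct (Nat.even t0), b'; simpl; congruence.
    - exists t0. auto. }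
  destruct (Key t) as [i [Hi Hq]]. lia.
  rewrite HY, HN0 in Hq by lia. destruct b', (Nat.even t); simpl in *; congruence.
Qed.
End Neg.

Theorem negative : ~ @Wred Cantor Cantor Aminus NatR WBWT2 CN.
Proof.
  intros [cH [cK HWr]]. specialize (HWr G0 G0_func G0_real).
  apply (neg_contra cH cK). intro y.
  destruct (HWr (nm y) y (fun n => eq_refl) (dom_WBWT2 y)) as (q & Y & Hc & Hd & Hw).
  exists q, Y. auto.
Qed.

Section Pos.
Variable p : baire.
Variable x : nat -> bool.
Hypothesis Hpx : forall n, p n = if x n then 1 else 0.

Lemma p_le1 n : p n <= 1.
Proof. rewrite Hpx. destruct (x n); lia. Qed.

Lemma ones_le n : ones p n <= n.
Proof. induction n; simpl; auto. pose proof (p_le1 n). lia. Qed.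

Lemma ones_mono a b : a <= b -> ones p a <= ones p b.
Proof. induction 1; simpl; lia. Qed.

Definition Aset n := ~ exists i, kn p i - 1 = S n.

Lemma kn_pred i : kn p i - 1 = ifz (p i) 0 (S (ones p i)).
Proof. unfold kn. destruct (p i); simpl; lia. Qed.

Lemma A_bound n : Aset n -> forall m, ones p m <= n.
Proof.
  intros HA m. induction m; simpl. lia.
  pose proof (p_le1 m). destruct (p m) eqn:E. lia.
  assert (ones p m <> n).
  { intro C. apply HA. exists m. rewrite kn_pred, E. simpl. congruence. }
  lia.
Qed.

Lemma ones_from N k : (forall n, N <= n -> p n = 1) -> k <= ones p (N + k).
Proof.
  intros H. induction k. lia. rewrite Nat.add_succ_r. simpl. rewrite H by lia. lia.
Qed.

Lemma vq_zero (s : baire) n : (forall j, j < n -> s j = 0) -> vq s n = 0.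
Proof. induction n; simpl; intros; auto. rewrite IHn by auto. simpl. apply H. lia. Qed.

Lemma vq_first (s : baire) j0 a : (forall j, j < j0 -> s j = 0) -> s j0 = S a ->
  forall n, j0 < n -> vq s n = S a.
Proof.
  intros H0 H1 n Hn. induction n. lia. simpl.
  destruct (Nat.eq_dec j0 n).
  - subst. rewrite vq_zero by auto. simpl. auto.
  - rewrite IHn by lia. reflexivity.
Qed.

Lemma first_nz (s : baire) : (exists j, s j <> 0) -> exists j a, s j = S a /\ forall j', j' < j -> s j' = 0.
Proof.
  intros Hex. destruct (least_nat (fun j => s j <> 0) Hex) as [j [H1 H2]].
  destruct (s j) eqn:E. congruence. exists j, n. split; auto.
  intros j' Hj. destruct (Nat.eq_dec (s j') 0); auto. exfalso; eapply H2; eauto.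
Qed.

Lemma minus1_first q q' : minus1 q q' -> (forall j, j < 0 + 0 -> True) ->
  exists j0, q j0 = S (q' 0) /\ forall j, j < j0 -> q j = 0.
Proof.
  intros [e [He1 [He2 He3]]] _. exists (e 0).
  assert (Hm : forall i, e 0 <= e i).
  { induction i. lia. specialize (He1 i). lia. }
  split.
  - rewrite He3. assert (q (e 0) <> 0) by (apply He2; eauto). lia.
  - intros j Hj. destruct (Nat.eq_dec (q j) 0); auto. exfalso.
    apply He2 in n. destruct n as [i Hi]. specialize (Hm i). lia.
Qed.

End Pos.

Theorem positive : @Wred Cantor Cantor (completion Aminus) (completion NatR) WBWT2 (bar CN).
Proof.
  exists cH, cK. intros G Gf GR p x Hpx Hdom. simpl in Hpx.
  set (A := Aset p).
  assert (HdA : @delta (completion Aminus) (kn p) (Some A)).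
  { simpl. exists (fun i => kn p i - 1). split.
    - exists (fun i => i). split. auto. split.
      + intros j; split; eauto. intros _. unfold kn. destruct (p j); simpl; lia.
      + auto.
    - intros n. unfold A, Aset. tauto. }
  assert (Hdom2 : dom (bar CN) (Some A)).
  { destruct (classic (exists n, A n)) as [[n Hn]|Hn].
    - exists (Some n). intros _. exists n. auto.
    - exists None. intros [y Hy]. exfalso. apply Hn. exists y. exact Hy. }
  destruct (GR (kn p) (Some A) HdA Hdom2) as (q & Yo & HG & HdY & Hbar).
  exists (hq p q), (fun i => hq p q i =? 1). split; [|split].
  - exists (kn p), q. split. apply CompF_K. split. auto. apply CompF_H.
  - intro n. unfold hq. destruct (vq q (S n)) as [|v]. reflexivity.
    unfold ifz. destruct (S v - ones p (S n)); reflexivity.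
  - destruct (classic (exists n, A n)) as [[n Hn]|Hn].
    + (* finitely many ones *)
      destruct (Hbar (ex_intro _ n Hn)) as [y' [-> Hy']].
      simpl in HdY. destruct HdY as [q' [Hm Hq']].
      destruct (minus1_first q q' Hm (fun _ _ => I)) as [j0 [Hj0 Hb]].
      rewrite Hq' in Hj0.
      exists false. split.
      * exists j0. intros i Hi. unfold hq.
        rewrite (vq_first q j0 y' Hb Hj0 (S i)) by lia.
        pose proof (A_bound p x Hpx y' Hy' (S i)).
        unfold ifz. destruct (S y' - ones p (S i)) eqn:E. lia. reflexivity.
      * intros N. apply NNPP. intro C.
        assert (HN : forall m, N <= m -> p m = 1).
        { intros m Hm0. rewrite Hpx. destruct (x m) eqn:E; auto. exfalso; apply C. eauto. }
        pose proof (ones_from p N (S y') HN). pose proof (A_bound p x Hpx y' Hy' (N + S y')). lia.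
    + assert (Hall : forall n, exists i, p i <> 0 /\ ones p i = n).
      { intro n. assert (~ A n) by (intro; apply Hn; eauto).
        unfold A, Aset in H. apply NNPP in H. destruct H as [i Hi].
        rewrite kn_pred in Hi. exists i. destruct (p i); simpl in Hi; split; congruence. }
      exists true. split.
      * destruct (classic (exists j, q j <> 0)) as [Hex|Hnone].
        -- destruct (first_nz q Hex) as [j0 [a [Hj0 Hb]]].
           destruct (Hall (S a)) as [i0 [_ Hi0]].
           exists (j0 + i0). intros i Hi. unfold hq.
           rewrite (vq_first q j0 a Hb Hj0 (S i)) by lia.
           pose proof (ones_mono p (i0) (S i)).
           unfold ifz. destruct (S a - ones p (S i)) eqn:E. reflexivity. lia.
        -- exists 0. intros i _. unfold hq. rewrite vq_zero. reflexivity.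
           intros j _. destruct (Nat.eq_dec (q j) 0); auto. exfalso; eauto.
      * intros N. destruct (Hall N) as [i [Hi1 Hi2]]. exists i. split.
        pose proof (ones_le p x Hpx i). lia.
        rewrite Hpx in Hi1. destruct (x i); congruence.
Qed.

Theorem proposition8p9 :
  @Wred Cantor Cantor (completion Aminus) (completion NatR) WBWT2 (bar CN) /\
  ~ @Wred Cantor Cantor Aminus NatR WBWT2 CN.
Proof. split. exact positive. exact negative. Qed.
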